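(* Let $r\in\{-1,+1\}$ and $\Phi(x,y)=r\phi(x-y)$. For any proper lsc $f:\mathbb R^n\to\overline{\mathbb R}$ and any $\bar x\in\mathbb R^n$ one has $\partial_\Phi f(\bar x)\subseteq\bar x-\nabla\phi^*(r\hat\partial f(\bar x))$. Moreover, the following are equivalent: (a) for every $\bar v\in\partial f(\bar x)$, $f(x)\ge f(\bar x)+r\phi(x-\bar x+\nabla\phi^*(r\bar v))-r\phi(\nabla\phi^*(r\bar v))$ for all $x\in\mathbb R^n$; (b) $\partial_\Phi f(\bar x)=\bar x-\nabla\phi^*(r\partial f(\bar x))$. Under either condition, $\partial f(\bar x)=\hat\partial f(\bar x)$. In particular, if $f$ is a-weakly convex (taking $r=-1$) or a-strongly convex (taking $r=+1$), then $\partial f=\hat\partial f$ and $\operatorname{dom}\partial_\Phi f=\operatorname{dom}\hat\partial f$.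
   Context: Standing assumption: $\phi:\mathbb R^n\to\mathbb R$ is convex, finite-valued, differentiable and strictly convex (Legendre with full domain), super-coercive; $\phi^*$ has the same properties and $\nabla\phi^*=(\nabla\phi)^{-1}$. $\hat\partial f$ is the regular (Fréchet) subdifferential and $\partial f$ the limiting subdifferential. For $\bar x\in\operatorname{dom}f$, $\partial_\Phi f(\bar x)=\{\bar y: f(x)\ge f(\bar x)+\Phi(x,\bar y)-\Phi(\bar x,\bar y)\ \forall x\}$ ($\emptyset$ if $\bar x\notin\operatorname{dom}f$); $\operatorname{dom}T=\{x:T(x)\ne\emptyset\}$. A proper lsc $f$ is a-weakly convex if for every $(\bar x,\bar v)\in\operatorname{graph}\partial f$: $f(x)\ge f(\bar x)-\phi(x-\bar x+\nabla\phi^*(-\bar v))+\phi(\nabla\phi^*(-\bar v))$ for all $x$; a-strongly convex if for every such pair $f(x)\ge f(\bar x)+\phi(x-\bar x+\nabla\phi^*(\bar v))-\phi(\nabla\phi^*(\bar v))$ for all $x$. *)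

(* Defs.v *)
From HB Require Import structures.
From mathcomp Require Import all_boot all_order all_algebra.
From mathcomp Require Import all_classical all_reals all_analysis.
Set Implicit Arguments. Unset Strict Implicit. Unset Printing Implicit Defensive.
Import Order.TTheory GRing.Theory Num.Theory.
Import numFieldNormedType.Exports.
Local Open Scope classical_set_scope.
Local Open Scope ring_scope.

Section Defs.
Context {R : realType} {n : nat}.
Notation V := 'rV[R]_n.

Definition dotp (u v : V) : R := \sum_(i < n) u ord0 i * v ord0 i.
Definition enorm (u : V) : R := Num.sqrt (dotp u u).

Definition has_gradient (g : V -> R) (dg : V -> V) :=
  forall x, differentiable g x /\ forall h, 'd g x h = dotp (dg x) h.
Definition strictly_convex (g : V -> R) :=
  forall x y (t : R), x != y -> 0 < t -> t < 1 ->
    g (t *: x + (1 - t) *: y) < t * g x + (1 - t) * g y.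
Definition super_coercive (g : V -> R) :=
  forall M : R, exists K : R, forall x, K < enorm x -> M * enorm x <= g x.
Definition is_conjugate (g gs : V -> R) :=
  forall y, (forall x, dotp x y - g x <= gs y) /\
            (forall e : R, 0 < e -> exists x, gs y - e < dotp x y - g x).
Definition legendre_pair (phi : V -> R) (gphi : V -> V)
    (phis : V -> R) (gphis : V -> V) :=
  [/\ has_gradient phi gphi, strictly_convex phi, super_coercive phi,
      is_conjugate phi phis &
      [/\ has_gradient phis gphis, strictly_convex phis, super_coercive phis,
          cancel gphi gphis & cancel gphis gphi]].

Local Open Scope ereal_scope.

Definition proper_fun (f : V -> \bar R) :=
  (forall x, f x != -oo) /\ (exists x, f x \is a fin_num).

Definition frechet_subdiff (f : V -> \bar R) (xb : V) : set V :=
  [set v | f xb \is a fin_num /\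
     forall e : R, (0 < e)%R -> exists2 d : R, (0 < d)%R &
       forall x, (enorm (x - xb) < d)%R ->
         f xb + (dotp v (x - xb) - e * enorm (x - xb))%:E <= f x].

Definition limiting_subdiff (f : V -> \bar R) (xb : V) : set V :=
  [set v | f xb \is a fin_num /\
     exists (xk vk : nat -> V),
       [/\ xk @ \oo --> xb, (fun k => f (xk k)) @ \oo --> f xb,
           vk @ \oo --> v & forall k, frechet_subdiff f (xk k) (vk k)]].

Definition Phi_subdiff (phi : V -> R) (r : R) (f : V -> \bar R) (xb : V) : set V :=
  [set y | f xb \is a fin_num /\
     forall x, f xb + (r * phi (x - y) - r * phi (xb - y))%:E <= f x].

Definition dom_map (T : V -> set V) : set V := [set x | T x !=set0].

Definition a_weakly_convex (phi : V -> R) (gphis : V -> V) (f : V -> \bar R) :=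
  forall xb vb, limiting_subdiff f xb vb -> forall x,
    f xb + (- phi (x - xb + gphis (- vb)) + phi (gphis (- vb)))%:E <= f x.

Definition a_strongly_convex (phi : V -> R) (gphis : V -> V) (f : V -> \bar R) :=
  forall xb vb, limiting_subdiff f xb vb -> forall x,
    f xb + (phi (x - xb + gphis vb) - phi (gphis vb))%:E <= f x.

End Defs.

(* Main.v *)
Require Import Defs.
From HB Require Import structures.
From mathcomp Require Import all_boot all_order all_algebra.
From mathcomp Require Import all_classical all_reals all_analysis.
From mathcomp Require Import lra.
Import Order.TTheory GRing.Theory Num.Theory.
Import numFieldNormedType.Exports.
Local Open Scope classical_set_scope.
Local Open Scope ring_scope.

Section H.
Context {R : realType} {n : nat}.
Notation V := 'rV[R]_n.

Lemma dotp_ge (u : V) i : u ord0 i ^+ 2 <= dotp u u.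
Proof.
rewrite /dotp (bigD1 i) //= -expr2 lerDl.
by apply: sumr_ge0 => j _; rewrite -expr2 sqr_ge0.
Qed.

Lemma norm_le_enorm (h : V) : `|h| <= enorm h.
Proof.
change (mx_norm h <= enorm h); rewrite mx_normrE.
apply: bigmax_le => [|ij _]; first exact: sqrtr_ge0.
case: ij => i j /=; rewrite (ord1 i).
rewrite -sqrtr_sqr /enorm ler_sqrt //.
- exact: (dotp_ge h j).
- exact: le_trans (sqr_ge0 _) (dotp_ge h j).
Qed.
Lemma grad_approx (g : V -> R) (dg : V -> V) z : has_gradient g dg ->
  forall e : R, 0 < e -> exists2 d : R, 0 < d & forall h : V, enorm h < d ->
    `|g (z + h) - g z - dotp (dg z) h| <= e * enorm h.
Proof.
move=> Hg e e0; have [dz dE] := Hg z.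
have /eqaddoP L := diff_locally dz.
have /nbhs_norm0P [d /= d0 P] := L e e0.
exists d => // h hd.
have := P h (le_lt_trans (norm_le_enorm h) hd).
rewrite -dE => H.
have E : g (z + h) - g z - 'd g z h = (g \o +%R^~ z - (cst (g z) + 'd g z)) h.
  rewrite !fctE /= [h + z]addrC opprD addrA.
  reflexivity.
rewrite E.
apply: le_trans H _.
by apply: ler_wpM2l; [exact: ltW| exact: norm_le_enorm].
Qed.
Lemma dotpZl (a : R) (u h : V) : dotp (a *: u) h = a * dotp u h.
Proof. by rewrite /dotp mulr_sumr; apply: eq_bigr => i _; rewrite mxE mulrA. Qed.

Lemma part1 (phi : V -> R) gphi (r : R) (f : V -> \bar R) xb y :
  has_gradient phi gphi -> (r = 1 \/ r = -1) ->
  Phi_subdiff phi r f xb y -> frechet_subdiff f xb (r *: gphi (xb - y)).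
Proof.
move=> Hg hr [fin H]; split => // e e0.
have [d d0 D] := @grad_approx _ _ (xb - y) Hg _ e0.
exists d => // x hx.
apply: le_trans (H x).
apply: leeD2l; rewrite lee_fin dotpZl.
have := D _ hx; rewrite (_ : xb - y + (x - xb) = x - y); last first.
  by rewrite addrC addrA subrK.
set a := phi (x - y); set b := phi (xb - y); set c := dotp _ _; set k := enorm _.
rewrite ler_norml => /andP [h1 h2].
by case: hr => ->; lra.
Qed.

Lemma frechet_limiting (f : V -> \bar R) xb v :
  frechet_subdiff f xb v -> limiting_subdiff f xb v.
Proof.
move=> [fin H]; split => //; exists (fun=> xb), (fun=> v); split => //;
  try exact: cvg_cst.
Qed.
Lemma rr (r : R) : (r = 1 \/ r = -1) -> r * r = 1.
Proof. by case=> ->; rewrite ?mulr1 ?mulrNN ?mulr1. Qed.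

Lemma rrZ (r : R) (v : V) : (r = 1 \/ r = -1) -> r *: (r *: v) = v.
Proof. by move=> hr; rewrite scalerA rr // scale1r. Qed.
End H.

Theorem mainTheorem8 (R : realType) (n : nat)
    (phi phis : 'rV[R]_n -> R) (gphi gphis : 'rV[R]_n -> 'rV[R]_n)
    (r : R) (f : 'rV[R]_n -> \bar R) :
  legendre_pair phi gphi phis gphis ->
  (r = 1 \/ r = -1) ->
  proper_fun f -> lower_semicontinuous f ->
  let condA xb := forall vb, limiting_subdiff f xb vb -> forall x,
      (f xb + (r * phi (x - xb + gphis (r *: vb))
               - r * phi (gphis (r *: vb)))%:E <= f x)%E in
  let condB xb := Phi_subdiff phi r f xb =
      (fun v => xb - gphis (r *: v)) @` limiting_subdiff f xb in
  (forall xb, Phi_subdiff phi r f xb `<=`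
      (fun v => xb - gphis (r *: v)) @` frechet_subdiff f xb) /\
  (forall xb, condA xb <-> condB xb) /\
  (forall xb, condA xb \/ condB xb ->
      limiting_subdiff f xb = frechet_subdiff f xb) /\
  ((r = -1 /\ a_weakly_convex phi gphis f) \/
   (r = 1 /\ a_strongly_convex phi gphis f) ->
     (forall x, limiting_subdiff f x = frechet_subdiff f x) /\
     dom_map (Phi_subdiff phi r f) = dom_map (frechet_subdiff f)).
Proof.
move=> [Hg _ _ _ [_ _ _ c1 c2]] hr _ _ condA condB.
have P1 : forall xb, Phi_subdiff phi r f xb `<=`
      (fun v => xb - gphis (r *: v)) @` frechet_subdiff f xb.
  move=> xb y Hy; exists (r *: gphi (xb - y)); first exact: (@part1 _ _ _ _ _ _ _ _ Hg hr).
  by rewrite rrZ // c1 opprB addrCA subrr addr0.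
have E1 : forall x xb g : 'rV[R]_n, x - (xb - g) = x - xb + g.
  by move=> x xb g; rewrite opprB addrCA addrC.
have E2 : forall xb g : 'rV[R]_n, xb - (xb - g) = g.
  by move=> xb g; rewrite opprB addrCA subrr addr0.
have AP : forall xb v, condA xb -> limiting_subdiff f xb v ->
    Phi_subdiff phi r f xb (xb - gphis (r *: v)).
  move=> xb v hA hv; split; first by case: hv.
  move=> x; have := hA v hv x.
  by rewrite E2 E1.
have PA : forall xb v, limiting_subdiff f xb v ->
    Phi_subdiff phi r f xb (xb - gphis (r *: v)) ->
    forall x, (f xb + (r * phi (x - xb + gphis (r *: v))
               - r * phi (gphis (r *: v)))%:E <= f x)%E.
  move=> xb v _ [_ H] x; have := H x.
  by rewrite E2 E1.
have AB : forall xb, condA xb <-> condB xb.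
  move=> xb; split => [hA|hB].
    apply/seteqP; split => y.
      move=> /P1 [v hv <-]; exists v => //; exact: frechet_limiting.
    by move=> [v hv <-]; apply: AP.
  move=> v hv; apply: PA => //; rewrite /condB in hB; rewrite hB.
  by exists v.
have AL : forall xb, condA xb -> limiting_subdiff f xb = frechet_subdiff f xb.
  move=> xb hA; apply/seteqP; split => v; last exact: frechet_limiting.
  move=> hv; have := @part1 _ _ _ _ _ _ _ _ Hg hr (AP _ _ hA hv).
  by rewrite opprB addrC subrK c2 rrZ.
split => //; split => //; split.
  by move=> xb [hA|hB]; apply: AL => //; apply/AB.
move=> H4.
have Aall : forall xb, condA xb.
  move=> xb vb hv x; case: H4 => [[hr1 hw]|[hr1 hs]]; rewrite hr1.
    by have := hw xb vb hv x; rewrite scaleN1r !mulN1r opprK.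
  by have := hs xb vb hv x; rewrite scale1r !mul1r.
split; first by move=> x; exact: AL.
apply/seteqP; split => xb [y hy].
  by have [v hv _] := P1 _ _ hy; exists v.
exists (xb - gphis (r *: y)); apply: AP => //; exact: frechet_limiting.
Qed.
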